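(* Fix a stream index $m\in\{1,\dots,M\}$ and write $n=N_r-M+1$. Let $R_{m,1},\dots,R_{m,K}>0$ be given transmission rates and let $\phi_{m,1},\dots,\phi_{m,K}>0$ be the constants defined in the context. Consider the optimization problem \[ \min_{\{\zeta_{m,k}\},\{\theta_{m,k}\}}\ \sum_{m=1}^M\sum_{k=1}^K \phi_{m,k}R_{m,k}\,\theta_{m,k}^{-n} \] subject to $\sum_{k=1}^K\zeta_{m,k}=\frac1M$ for all $m$; $\zeta_{m,k}>0$ and $\theta_{m,k}>0$ for all $m,k$; and $\theta_{m,k}\le \frac{\zeta_{m,i}}{2^{R_{m,i}}-1}-\sum_{l=1}^{i-1}\zeta_{m,l}$ for all $m$, all $k\in\{1,\dots,K\}$ and all $i\in\{k,\dots,K\}$. Define the $K\times K$ upper triangular matrix $\mathbf U_m$ with diagonal entries $[\mathbf U_m]_{kk}=\frac{1}{2^{R_{m,k}}-1}$, entries $[\mathbf U_m]_{ij}=-1$ for $i<j$, and $[\mathbf U_m]_{ij}=0$ for $i>j$; let $\mathbf L_m=\mathbf U_m^{\mathrm T}$. Let $\mathbf 1_K$ be the $K\times1$ all-ones vector, $\mathbf e_k$ the $k$-th standard basis column vector, and \[ \mathbf b_m=\left(\left(\frac{n\,\phi_{m,1}R_{m,1}}{\mathbf e_1^{\mathrm T}\mathbf U_m^{-1}\mathbf 1_K}\right)^{\frac{1}{n+1}},\dots,\left(\frac{n\,\phi_{m,K}R_{m,K}}{\mathbf e_K^{\mathrm T}\mathbf U_m^{-1}\mathbf 1_K}\right)^{\frac{1}{n+1}}\right)^{\mathrm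 T}. \] Then the optimal power allocation coefficients $\boldsymbol\zeta_m^*=(\zeta_{m,1}^*,\dots,\zeta_{m,K}^* )^{\mathrm T}$ are \[ \boldsymbol\zeta_m^*=\frac{\mathbf L_m^{-1}\mathbf b_m}{M\,\mathbf 1_K^{\mathrm T}\mathbf L_m^{-1}\mathbf b_m}, \] and the optimal $\theta_{m,k}^*$ are \[ \theta_{m,k}^*=\frac{\zeta_{m,k}^*}{2^{R_{m,k}}-1}-\sum_{l=1}^{k-1}\zeta_{m,l}^*=\frac{\mathbf a_{m,k}^{\mathrm T}\mathbf L_m^{-1}\mathbf b_m}{M\,\mathbf 1_K^{\mathrm T}\mathbf L_m^{-1}\mathbf b_m}, \] where $\mathbf a_{m,k}=(\underbrace{-1,\dots,-1}_{k-1},\frac{1}{2^{R_{m,k}}-1},\underbrace{0,\dots,0}_{K-k})^{\mathrm T}$.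
   Context: Setting: a base station with $N_t$ antennas serves $K$ clusters, each of $N_r$ single-antenna devices, each cluster requesting $M\le\min(N_t,N_r)$ data streams; $M,N_r,N_t,K$ are positive integers. $\mathbf R_t$ ($N_t\times N_t$) and $\mathbf R_r$ ($N_r\times N_r$) are Hermitian positive definite correlation matrices; $\lambda_1,\dots,\lambda_{N_r}$ are the eigenvalues of $\mathbf R_r$. $\mathbf V\in\mathbb C^{N_t\times M}$ has unit-norm columns and $\mathbf R_{t'}=\mathbf V^{\mathrm H}\mathbf R_t\mathbf V$ (assumed invertible). $\bar\gamma>0$ is the transmit SNR, and the path loss to cluster $k$ is $\mathcal K d_k^{-\alpha}$ with $\mathcal K>0$, $\alpha\ge2$, $d_1\le\dots\le d_K$. Let $W$ be the $N_r\times N_r$ matrix with $(i,j)$ entry $\lambda_i^{N_r-j}$ and $D$ the matrix obtained from $W$ by replacing its first column by $(\lambda_i^{M-2}\ln\lambda_i)_{i=1}^{N_r}$. The constants are \[ \phi_{m,k}=\frac{1}{N_r!\det(\mathbf R_r)}\left(\frac{[\mathbf R_{t'}^{-1}]_{mm}}{\bar\gamma\,\mathcal K d_k^{-\alpha}}\right)^{N_r}\quad (M=1), \] \[ \phi_{m,k}=\frac{(-1)^{N_r-M}(N_r-1)!\det D}{(N_r-M)!\,(N_r-M+1)!\,(M-2)!\,\det W}\left(\frac{[\mathbf R_{t'}^{-1}]_{mm}}{\bar\gamma\,\mathcal K d_k^{-\alpha}}\right)^{N_r-M+1}\quad (M>1). \] (They are the coefficients of the asymptotic outage probability $p^{out}_{m,k}\simeq\phi_{m,k}\theta_{m,k}^{-(N_r-M+1)}$.)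 *)

(* Defs.v *)
From HB Require Import structures.
From mathcomp Require Import all_boot all_order all_algebra.
From mathcomp Require Import reals exp.
From mathcomp Require Import complex.
Set Implicit Arguments. Unset Strict Implicit. Unset Printing Implicit Defensive.
Import Order.TTheory GRing.Theory Num.Theory.
Local Open Scope ring_scope.


Section Defs.
Variable R : realType.
Local Notation C := R[i].

Definition ctr {m n : nat} (A : 'M[C]_(m, n)) : 'M[C]_(n, m) :=
  map_mx (@conjc R) A^T.

Definition hermitian {n : nat} (A : 'M[C]_n) : Prop := ctr A = A.

Definition herm_pd {n : nat} (A : 'M[C]_n) : Prop :=
  hermitian A /\
  forall v : 'cV[C]_n, v != 0 -> 0 < complex.Re ((ctr v *m A *m v) 0 0).

Definition eigenvalues_of {n : nat} (A : 'M[C]_n) (lam : 'I_n -> R) : Prop :=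
  char_poly A = \prod_(i < n) ('X - ((lam i)%:C)%C%:P).

(* W: (i,j) entry lam_i^(Nr - j) (1-indexed j); 0-indexed: lam_i^(Nr-1-j) *)
Definition Wmx (Nr : nat) (lam : 'I_Nr -> R) : 'M[R]_Nr :=
  \matrix_(i < Nr, j < Nr) lam i ^+ (Nr - 1 - j).

Definition Dmx (Nr M : nat) (lam : 'I_Nr -> R) : 'M[R]_Nr :=
  \matrix_(i < Nr, j < Nr)
     if j == 0%N :> nat then lam i ^+ (M - 2) * ln (lam i)
     else lam i ^+ (Nr - 1 - j).

Definition Rtp {Nt M : nat} (Rt : 'M[C]_Nt) (V : 'M[C]_(Nt, M)) : 'M[C]_M :=
  ctr V *m Rt *m V.

Definition phi (Nt Nr M K : nat) (Rt : 'M[C]_Nt) (Rr : 'M[C]_Nr)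
  (lam : 'I_Nr -> R) (V : 'M[C]_(Nt, M)) (gam Kc alpha : R) (d : 'I_K -> R)
  (m : 'I_M) (k : 'I_K) : R :=
  let c := complex.Re ((invmx (Rtp Rt V)) m m) / (gam * (Kc * powR (d k) (- alpha))) in
  if M == 1%N then
    1 / ((Nr`!)%:R * complex.Re (\det Rr)) * c ^+ Nr
  else
    ((-1) ^+ (Nr - M) * (Nr.-1)`!%:R * \det (Dmx M lam)) /
    ((Nr - M)`!%:R * (Nr - M).+1`!%:R * (M - 2)`!%:R * \det (Wmx lam))
    * c ^+ (Nr - M + 1).

Definition tw (r : R) : R := powR 2 r - 1.

Definition Umx (K : nat) (rate : 'I_K -> R) : 'M[R]_K :=
  \matrix_(i < K, j < K)
     if i == j then 1 / tw (rate i) else if (i < j)%N then -1 else 0.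

Definition Lmx (K : nat) (rate : 'I_K -> R) : 'M[R]_K := (Umx rate)^T.

Definition ones (K : nat) : 'cV[R]_K := const_mx 1.

Definition bvec (K n : nat) (ph rate : 'I_K -> R) : 'cV[R]_K :=
  \col_(k < K)
    powR ((n%:R * ph k * rate k) / ((invmx (Umx rate) *m ones K) k 0))
         (1 / (n.+1)%:R).

Definition avec (K : nat) (rate : 'I_K -> R) (k : 'I_K) : 'cV[R]_K :=
  \col_(l < K) if (l < k)%N then -1 else if l == k then 1 / tw (rate k) else 0.

Definition feasible (M K : nat) (rate : 'I_M -> 'I_K -> R)
  (zeta theta : 'I_M -> 'I_K -> R) : Prop :=
  (forall m, \sum_(k < K) zeta m k = 1 / M%:R) /\
  (forall m k, 0 < zeta m k) /\
  (forall m k, 0 < theta m k) /\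
  (forall m (k i : 'I_K), (k <= i)%N ->
     theta m k <= zeta m i / tw (rate m i) - \sum_(l < K | (l < i)%N) zeta m l).

Definition objective (M K n : nat) (ph rate : 'I_M -> 'I_K -> R)
  (theta : 'I_M -> 'I_K -> R) : R :=
  \sum_(m < M) \sum_(k < K) ph m k * rate m k * (theta m k) ^- n.

Definition den (M K n : nat) (ph rate : 'I_K -> R) : R :=
  M%:R * ((ones K)^T *m invmx (Lmx rate) *m bvec n ph rate) 0 0.

Definition zstar (M K n : nat) (ph rate : 'I_M -> 'I_K -> R) (m : 'I_M) (k : 'I_K) : R :=
  (invmx (Lmx (rate m)) *m bvec n (ph m) (rate m)) k 0 / den M n (ph m) (rate m).

Definition tstar (M K n : nat) (ph rate : 'I_M -> 'I_K -> R) (m : 'I_M) (k : 'I_K) : R :=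
  zstar n ph rate m k / tw (rate m k) - \sum_(l < K | (l < k)%N) zstar n ph rate m l.

End Defs.

(* Main.v *)
Require Import Defs.
From HB Require Import structures.
From mathcomp Require Import all_boot all_order all_algebra.
From mathcomp Require Import reals sequences exp.
From mathcomp Require Import complex.
From mathcomp Require Import ring lra zify.
Set Implicit Arguments. Unset Strict Implicit. Unset Printing Implicit Defensive.
Import Order.TTheory GRing.Theory Num.Theory.
Local Open Scope ring_scope.

Section Aux.
Variable R : realType.

Lemma bern (u : R) n : 0 <= u -> 1 + n.+1%:R * (u - 1) <= u ^+ n.+1.
Proof.
move=> u0; elim: n => [|n IH]; first by rewrite expr1; lra.
rewrite exprS.
have h : u * (1 + n.+1%:R * (u - 1)) <= u * u ^+ n.+1 by apply: ler_wpM2l.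
have hn : 0 <= n.+1%:R :> R by rewrite ler0n.
have hq := mulr_ge0 hn (sqr_ge0 (u-1)).
rewrite -[n.+2]addn1 natrD.
move: h hq; set N := n.+1%:R; set P := u ^+ n.+1 => h hq.
nra.
Qed.

Lemma amgm (a q : R) n : 0 <= a -> 0 < q ->
  n.+1%:R * a * q ^+ n - n%:R * q ^+ n.+1 <= a ^+ n.+1.
Proof.
move=> a0 q0.
have := @bern (a / q) n (divr_ge0 a0 (ltW q0)).
rewrite exprMn exprVn => h.
have qn : 0 < q ^+ n.+1 by rewrite exprn_gt0.
have := ler_wpM2r (ltW qn) h.
rewrite mulfVK ?gt_eqF //.
have qn' : q ^+ n != 0 by rewrite expf_neq0 // gt_eqF.
move=> h2; apply: le_trans h2; rewrite le_eqVlt; apply/orP; left; apply/eqP.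
rewrite exprS -natr1; field.
by rewrite gt_eqF.
Qed.

Lemma conv0 (a q : R) n : 0 < a -> 0 < q ->
  q ^+ n - a ^+ n <= n%:R * q ^+ n.+1 * (a^-1 - q^-1).
Proof.
move=> a0 q0.
have h := @amgm a q n (ltW a0) q0.
rewrite -(ler_pM2r a0).
have e : (n%:R * q ^+ n.+1 * (a^-1 - q^-1)) * a =
         n%:R * q ^+ n.+1 - n%:R * q ^+ n * a.
  rewrite exprS; field; by rewrite !gt_eqF.
rewrite e; move: h; rewrite (exprS a) -natr1; nra.
Qed.

Lemma conv (s t : R) n : 0 < s -> 0 < t ->
  s ^- n - t ^- n <= n%:R * s ^- n.+1 * (t - s).
Proof.
move=> s0 t0.
have := @conv0 (t^-1) (s^-1) n.
rewrite !invrK !exprVn; apply; by rewrite invr_gt0.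
Qed.

Lemma pow_mono (A Q g1 g2 : R) p : 0 < g1 -> g1 <= g2 ->
  0 < A * (Q * g1) ^+ p -> A * (Q * g1) ^+ p <= A * (Q * g2) ^+ p.
Proof.
move=> g10 g12; rewrite !exprMn !mulrA => h.
have gp : 0 < g1 ^+ p by rewrite exprn_gt0.
have AQ : 0 < A * Q ^+ p by rewrite -(pmulr_lgt0 _ gp).
apply: ler_wpM2l; first exact: ltW.
by apply: lerXn2r; rewrite // nnegrE ltW // (lt_le_trans g10 g12).
Qed.

Lemma powR_pos_mono (x y a : R) : 0 < x -> x <= y -> 0 <= a ->
  powR y (- a) <= powR x (- a).
Proof.
move=> x0 xy a0; have y0 := lt_le_trans x0 xy.
rewrite /powR !gt_eqF // ler_expR !mulNr lerN2.
apply: ler_wpM2l => //; by rewrite ler_ln.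
Qed.

Lemma powR_root (x : R) n : 0 <= x -> powR x (1 / (n.+1)%:R) ^+ n.+1 = x.
Proof.
move=> x0; rewrite -powR_mulrn ?powR_ge0 // -powRrM mul1r mulVf ?powRr1 //.
by rewrite pnatr_eq0.
Qed.

End Aux.
Section Mat.
Variable R : realType.
Variable K : nat.
Variable r : 'I_K -> R.
Hypothesis Hr : forall k, 0 < r k.

Lemma ln2_gt0 : 0 < ln (2 : R).
Proof. by apply: ln_gt0; rewrite ltr1n. Qed.

Lemma powR2E (x : R) : powR 2 x = expR (x * ln 2).
Proof. by rewrite /powR pnatr_eq0. Qed.

Lemma tw_ge (x : R) : x * ln 2 <= tw x.
Proof. rewrite /tw powR2E; have := expR_ge1Dx (x * ln 2); lra. Qed.

Lemma tw_le (x : R) : tw x <= x * ln 2 * powR 2 x.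
Proof.
rewrite /tw powR2E; have := expR_ge1Dx (- (x * ln 2)).
rewrite expRN => h.
have e0 : 0 < expR (x * ln 2) by apply: expR_gt0.
have := ler_wpM2r (ltW e0) h; rewrite mulVf ?gt_eqF //; lra.
Qed.

Lemma tw_gt0 k : 0 < tw (r k).
Proof. apply: lt_le_trans (tw_ge _); apply: mulr_gt0 => //; exact: ln2_gt0. Qed.

Lemma Lmul (y : 'cV[R]_K) k :
  (Lmx r *m y) k 0 = y k 0 / tw (r k) - \sum_(l < K | (l < k)%N) y l 0.
Proof.
rewrite mxE (bigD1 k) //= !mxE eqxx mul1r mulrC; congr (_ + _).
rewrite -sumrN big_mkcond [RHS]big_mkcond /=; apply: eq_bigr => j _.
rewrite !mxE; case: (eqVneq j k) => [->|jk] /=; first by rewrite ltnn.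
by case: ifP => _; rewrite ?mulN1r ?mul0r ?oppr0.
Qed.

Lemma Umul (y : 'cV[R]_K) k :
  (Umx r *m y) k 0 = y k 0 / tw (r k) - \sum_(l < K | (k < l)%N) y l 0.
Proof.
rewrite mxE (bigD1 k) //= !mxE eqxx mul1r mulrC; congr (_ + _).
rewrite -sumrN big_mkcond [RHS]big_mkcond /=; apply: eq_bigr => j _.
rewrite !mxE; case: (eqVneq j k) => [->|jk] /=; first by rewrite ltnn.
by case: ifP => _; rewrite ?mulN1r ?mul0r ?oppr0.
Qed.

Lemma L_unit : Lmx r \in unitmx.
Proof.
rewrite unitmxE det_trig; last first.
  apply/is_trig_mxP => i j ij; rewrite !mxE.
  case: eqVneq => [ji|_]; first by rewrite ji ltnn in ij.
  by rewrite ltnNge (ltnW ij).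
rewrite unitfE prodf_seq_neq0; apply/allP => i _ /=.
by rewrite /Lmx !mxE eqxx mul1r invr_eq0 gt_eqF // tw_gt0.
Qed.

Lemma U_unit : Umx r \in unitmx.
Proof. by rewrite -unitmx_tr L_unit. Qed.


Definition wv := invmx (Umx r) *m ones R K.

Lemma Uw : Umx r *m wv = ones R K.
Proof. by rewrite /wv mulKVmx // U_unit. Qed.

Lemma w_rec k : wv k 0 = tw (r k) * (1 + \sum_(l < K | (k < l)%N) wv l 0).
Proof.
have := congr1 (fun A : 'cV[R]_K => A k 0) Uw; have o1 : ones R K k 0 = 1 by rewrite mxE.
rewrite /= Umul o1 => h.
have t0 := tw_gt0 k.
rewrite -h; field; by rewrite gt_eqF.
Qed.

Lemma w_gt0 k : 0 < wv k 0.
Proof.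
suff: forall d (k : 'I_K), (K - k <= d)%N -> 0 < wv k 0 by apply; apply: leqnn.
elim=> [|d IH] {}k hk.
  by have := ltn_ord k; lia.
rewrite w_rec; apply: mulr_gt0; first exact: tw_gt0.
apply: (@lt_le_trans _ _ 1); first by [].
rewrite lerDl; apply: sumr_ge0 => l kl; apply: ltW; apply: IH.
by have := ltn_ord l; lia.
Qed.

Lemma x_rec (b : 'cV[R]_K) k :
  (invmx (Lmx r) *m b) k 0 =
  tw (r k) * (b k 0 + \sum_(l < K | (l < k)%N) (invmx (Lmx r) *m b) l 0).
Proof.
have := congr1 (fun A : 'cV[R]_K => A k 0) (mulKVmx L_unit b); rewrite /= Lmul => h.
have t0 := tw_gt0 k.
rewrite -h; field; by rewrite gt_eqF.
Qed.

Lemma x_gt0 (b : 'cV[R]_K) k : (forall l, 0 < b l 0) ->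
  0 < (invmx (Lmx r) *m b) k 0.
Proof.
move=> hb.
suff: forall d (k : 'I_K), (k <= d)%N -> 0 < (invmx (Lmx r) *m b) k 0.
  by apply; apply: leqnn.
elim=> [|d IH] {}k hk.
  rewrite x_rec; apply: mulr_gt0; first exact: tw_gt0.
  rewrite big_pred0 ?addr0 // => l; lia.
rewrite x_rec; apply: mulr_gt0; first exact: tw_gt0.
apply: ltr_wpDr; last exact: hb.
apply: sumr_ge0 => l kl; apply: ltW; apply: IH; lia.
Qed.

Lemma ones_x (b : 'cV[R]_K) :
  ((ones R K)^T *m invmx (Lmx r) *m b) 0 0 = \sum_k wv k 0 * b k 0.
Proof.
rewrite -Uw trmx_mul -/(Lmx r) -!mulmxA mulKVmx ?L_unit // mxE.
by apply: eq_bigr => k _; rewrite mxE.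
Qed.

Lemma S_split (k i : 'I_K) : (k < i)%N ->
  wv i 0 + \sum_(l < K | (i < l)%N) wv l 0 <= \sum_(l < K | (k < l)%N) wv l 0.
Proof.
move=> ki.
rewrite [X in _ <= X](bigID (fun l : 'I_K => (i < l)%N)) /= addrC.
have -> : \sum_(l < K | (k < l)%N && (i < l)%N) wv l 0 =
          \sum_(l < K | (i < l)%N) wv l 0.
  by apply: eq_bigl => l; apply/idP/idP => [/andP[]//|h]; rewrite h andbT; lia.
rewrite lerD2r (bigD1 i) /=; last by rewrite ki ltnn.
rewrite lerDl; apply: sumr_ge0 => l _; exact: ltW (w_gt0 l).
Qed.

Lemma w_mono (k i : 'I_K) : (k <= i)%N -> r k / wv k 0 <= r i / wv i 0.
Proof.
rewrite leq_eqVlt => /orP[/eqP e|ki].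
  by have -> : k = i by apply: val_inj.
have wk := w_gt0 k; have wi := w_gt0 i.
rewrite ler_pdivrMr // mulrAC ler_pdivlMr //.
rewrite (w_rec k) (w_rec i).
have := @S_split k i ki; rewrite (w_rec i).
set Si := \sum_(l < K | (i < l)%N) _; set Sk := \sum_(l < K | (k < l)%N) _.
move=> hS.
have tk := tw_gt0 k; have ti := tw_gt0 i.
have Si0 : 0 <= Si by apply: sumr_ge0 => l _; exact: ltW (w_gt0 l).
have h1 := tw_ge (r k); have h2 := tw_le (r i).
have l2 := ln2_gt0.
have rk := Hr k; have ri := Hr i.
have p2 : powR 2 (r i) = 1 + tw (r i) by rewrite /tw; ring.
rewrite p2 in h2.
have A : r k * tw (r i) <= r i * tw (r k) * (1 + tw (r i)).
  have B : r k * ln 2 * tw (r i) <= tw (r k) * (r i * ln 2 * (1 + tw (r i))).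
    apply: ler_pM => //; first by apply: ltW; apply: mulr_gt0.
    exact: ltW.
  have : (r k * tw (r i)) * ln 2 <= (r i * tw (r k) * (1 + tw (r i))) * ln 2.
    by move: B; lra.
  by rewrite ler_pM2r.
have C : 1 + tw (r i) * (1 + Si) + Si <= 1 + Sk by lra.
have D : (1 + Si) * (1 + tw (r i)) <= 1 + Sk by move: C; nra.
have E := ler_wpM2r (ltW (ltr_wpDr Si0 ltr01 : 0 < 1 + Si)) A.
have F := ler_wpM2l (ltW (mulr_gt0 ri tk)) D.
move: E F; nra.
Qed.

End Mat.

Section Opt.
Variable R : realType.
Variable K : nat.
Variable r : 'I_K -> R.
Hypothesis Hr : forall k, 0 < r k.
Variable ph : 'I_K -> R.
Hypothesis Hph : forall k, 0 < ph k.
Hypothesis Hmono : forall k i : 'I_K, (k <= i)%N -> ph k <= ph i.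
Variables n M : nat.
Hypothesis Hn : (0 < n)%N.
Hypothesis HM : (0 < M)%N.
Hypothesis HK : (0 < K)%N.

Local Notation b := (bvec n ph r).
Local Notation w := (wv r).
Local Notation x := (invmx (Lmx r) *m bvec n ph r).
Local Notation D := (den M n ph r).

Lemma bE k : b k 0 = powR (n%:R * ph k * r k / w k 0) (1 / (n.+1)%:R).
Proof. by rewrite mxE. Qed.

Lemma base_gt0 k : 0 < n%:R * ph k * r k / w k 0.
Proof.
apply: divr_gt0; last exact: w_gt0.
by apply: mulr_gt0 => //; apply: mulr_gt0 => //; rewrite ltr0n.
Qed.

Lemma b_gt0 k : 0 < b k 0.
Proof. by rewrite bE; apply: powR_gt0; apply: base_gt0. Qed.

Lemma b_pow k : b k 0 ^+ n.+1 = n%:R * ph k * r k / w k 0.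
Proof. by rewrite bE powR_root // ltW // base_gt0. Qed.

Lemma b_mono (k i : 'I_K) : (k <= i)%N -> b k 0 <= b i 0.
Proof.
move=> ki; rewrite !bE; apply: ge0_ler_powR.
- by apply: divr_ge0 => //; rewrite ler0n.
- by rewrite nnegrE ltW // base_gt0.
- by rewrite nnegrE ltW // base_gt0.
rewrite -!mulrA; apply: ler_wpM2l; first by rewrite ler0n.
have := w_mono Hr ki => h.
apply: ler_pM => //; first exact: ltW.
  by apply: divr_ge0; apply: ltW => //; apply: w_gt0.
exact: Hmono.
Qed.

Definition Ssum := \sum_k w k 0 * b k 0.

Lemma S_gt0 : 0 < Ssum.
Proof.
rewrite /Ssum (bigD1 (Ordinal HK)) //=; apply: ltr_pwDl.
  by apply: mulr_gt0; [apply: w_gt0 | apply: b_gt0].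
by apply: sumr_ge0 => l _; apply: mulr_ge0; apply: ltW; [apply: w_gt0 | apply: b_gt0].
Qed.

Lemma D_E : D = M%:R * Ssum.
Proof. by rewrite /den (ones_x Hr). Qed.

Lemma D_gt0 : 0 < D.
Proof. by rewrite D_E; apply: mulr_gt0; [rewrite ltr0n | exact: S_gt0]. Qed.

Lemma sum_x : \sum_k x k 0 = Ssum.
Proof.
rewrite /Ssum -(ones_x Hr) -mulmxA mxE; apply: eq_bigr => k _.
by rewrite !mxE mul1r.
Qed.

Lemma x_pos k : 0 < x k 0.
Proof. by apply: x_gt0 => // l; apply: b_gt0. Qed.

Lemma t_E k : (x k 0 / D) / tw (r k) - \sum_(l < K | (l < k)%N) (x l 0 / D) = b k 0 / D.
Proof.
have := Lmul r x k; rewrite mulKVmx ?L_unit // => h.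
rewrite -mulr_suml h.
have := D_gt0; have := tw_gt0 Hr k => t0 d0.
field; by rewrite !gt_eqF.
Qed.

Lemma sum_z : \sum_k (x k 0 / D) = 1 / M%:R.
Proof.
rewrite -mulr_suml sum_x D_E.
have := S_gt0 => s0.
have m0 : 0 < M%:R :> R by rewrite ltr0n.
field; by rewrite !gt_eqF.
Qed.

Lemma sum_wt : \sum_k w k 0 * (b k 0 / D) = 1 / M%:R.
Proof.
under eq_bigr do rewrite mulrA.
rewrite -mulr_suml -/Ssum D_E.
have := S_gt0 => s0.
have m0 : 0 < M%:R :> R by rewrite ltr0n.
field; by rewrite !gt_eqF.
Qed.

Lemma wL (zeta : 'I_K -> R) :
  \sum_k w k 0 * (zeta k / tw (r k) - \sum_(l < K | (l < k)%N) zeta l) = \sum_k zeta k.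
Proof.
pose zv := \col_k zeta k.
have e : forall k, zeta k / tw (r k) - \sum_(l < K | (l < k)%N) zeta l = (Lmx r *m zv) k 0.
  move=> k; rewrite Lmul !mxE; congr (_ - _); apply: eq_bigr => l _; by rewrite mxE.
under eq_bigr do rewrite e.
have h1 : \sum_i w i 0 * (Lmx r *m zv) i 0 = ((w)^T *m (Lmx r *m zv)) 0 0.
  by rewrite mxE; apply: eq_bigr => i _; congr (_ * _); rewrite [RHS]mxE.
rewrite h1 mulmxA /Lmx -trmx_mul (Uw Hr) mxE.
by apply: eq_bigr => i _; rewrite !mxE mul1r.
Qed.

Lemma opt (zeta theta : 'I_K -> R) :
  \sum_k zeta k = 1 / M%:R -> (forall k, 0 < theta k) ->
  (forall k, theta k <= zeta k / tw (r k) - \sum_(l < K | (l < k)%N) zeta l) ->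
  \sum_k ph k * r k * (b k 0 / D) ^- n <= \sum_k ph k * r k * theta k ^- n.
Proof.
move=> hz ht hle.
have hw : \sum_k w k 0 * theta k <= 1 / M%:R.
  rewrite -hz -wL; apply: ler_sum => k _; apply: ler_wpM2l; last exact: hle.
  exact: ltW (w_gt0 Hr k).
have d0 := D_gt0.
have step : forall k, ph k * r k * (b k 0 / D) ^- n - ph k * r k * theta k ^- n <=
     D ^+ n.+1 * (w k 0 * theta k - w k 0 * (b k 0 / D)).
  move=> k.
  have s0 : 0 < b k 0 / D by apply: divr_gt0 => //; apply: b_gt0.
  have := conv n s0 (ht k) => h.
  have c0 : 0 < ph k * r k by apply: mulr_gt0.
  have := ler_wpM2l (ltW c0) h.
  have -> : ph k * r k * (n%:R * (b k 0 / D) ^- n.+1 * (theta k - b k 0 / D)) =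
            D ^+ n.+1 * (w k 0 * theta k - w k 0 * (b k 0 / D)).
    have e1 : (b k 0 / D) ^- n.+1 = D ^+ n.+1 / b k 0 ^+ n.+1.
      by rewrite exprMn exprVn invfM invrK mulrC.
    rewrite e1 (b_pow k).
    have w0 := w_gt0 Hr k.
    have n0 : n%:R != 0 :> R by rewrite pnatr_eq0 -lt0n.
    have p0 := Hph k; have r0 := Hr k.
    field.
    by rewrite n0 !gt_eqF.
  move=> h2; apply: le_trans h2; rewrite mulrBr; exact: lexx.
rewrite -subr_ge0 -opprB oppr_ge0 -sumrB.
apply: le_trans (ler_sum _ (fun k _ => step k)) _.
rewrite -mulr_sumr sumrB sum_wt.
apply: mulr_ge0_le0; first by apply: ltW; apply: exprn_gt0.
by rewrite subr_le0.
Qed.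

End Opt.

Lemma avec_b (R : realType) (K : nat) (r : 'I_K -> R) (Hr : forall k, 0 < r k)
  (bb : 'cV[R]_K) k :
  ((avec r k)^T *m invmx (Lmx r) *m bb) 0 0 = bb k 0.
Proof.
have -> : (avec r k)^T = row k (Lmx r).
  apply/matrixP => i j; rewrite !mxE.
  case: (eqVneq j k) => [->|jk]; first by rewrite ltnn.
  by [].
by rewrite -mulmxA -row_mul mulKVmx ?(L_unit Hr) // mxE.
Qed.

Lemma phi_mono (R : realType) (Nt Nr M K : nat) (Rt : 'M[R[i]]_Nt) (Rr : 'M[R[i]]_Nr)
  (lam : 'I_Nr -> R) (V : 'M[R[i]]_(Nt, M)) (gam Kc alpha : R)
  (Hgam : 0 < gam) (HKc : 0 < Kc) (Halpha : 2 <= alpha)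
  (d : 'I_K -> R) (Hd : forall k, 0 < d k)
  (Hdsort : forall k l : 'I_K, (k <= l)%N -> d k <= d l) m (k i : 'I_K) :
  (k <= i)%N -> 0 < phi Rt Rr lam V gam Kc alpha d m k ->
  phi Rt Rr lam V gam Kc alpha d m k <= phi Rt Rr lam V gam Kc alpha d m i.
Proof.
move=> ki.
have g0 : forall k, 0 < gam * (Kc * powR (d k) (- alpha)).
  by move=> j; apply: mulr_gt0 => //; apply: mulr_gt0 => //; apply: powR_gt0.
have gki : (gam * (Kc * powR (d k) (- alpha)))^-1 <= (gam * (Kc * powR (d i) (- alpha)))^-1.
  rewrite lef_pV2 ?posrE ?g0 //.
  apply: ler_wpM2l; first exact: ltW.
  apply: ler_wpM2l; first exact: ltW.
  apply: powR_pos_mono => //; first exact: Hdsort.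
  lra.
rewrite /phi /=; case: ifP => _; apply: pow_mono => //; by rewrite invr_gt0.
Qed.

Theorem theorem1 (R : realType) (Nt Nr M K : nat)
  (HNt : (0 < Nt)%N) (HNr : (0 < Nr)%N) (HM : (0 < M)%N) (HK : (0 < K)%N)
  (HMle : (M <= minn Nt Nr)%N)
  (Rt : 'M[R[i]]_Nt) (Rr : 'M[R[i]]_Nr)
  (HRt : herm_pd Rt) (HRr : herm_pd Rr)
  (lam : 'I_Nr -> R) (Hlam : eigenvalues_of Rr lam)
  (V : 'M[R[i]]_(Nt, M))
  (HV : forall j : 'I_M, \sum_(i < Nt) V i j * conjc (V i j) = 1)
  (HRtp : Rtp Rt V \in unitmx)
  (gam Kc alpha : R) (Hgam : 0 < gam) (HKc : 0 < Kc) (Halpha : 2 <= alpha)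
  (d : 'I_K -> R) (Hd : forall k, 0 < d k)
  (Hdsort : forall k l : 'I_K, (k <= l)%N -> d k <= d l)
  (rate : 'I_M -> 'I_K -> R) (Hrate : forall m k, 0 < rate m k)
  (Hphi : forall m k, 0 < phi Rt Rr lam V gam Kc alpha d m k) :
  let ph := phi Rt Rr lam V gam Kc alpha d in
  let n := (Nr - M + 1)%N in
  feasible rate (zstar n ph rate) (tstar n ph rate) /\
  (forall zeta theta : 'I_M -> 'I_K -> R, feasible rate zeta theta ->
     objective n ph rate (tstar n ph rate) <= objective n ph rate theta) /\
  (forall (m : 'I_M) (k : 'I_K),
     tstar n ph rate m k =
     ((avec (rate m) k)^T *m invmx (Lmx (rate m)) *m bvec n (ph m) (rate m)) 0 0
       / den M n (ph m) (rate m)).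
Proof.
move=> ph n.
have Hn : (0 < n)%N by rewrite /n addn1.
have Hmono : forall m (k i : 'I_K), (k <= i)%N -> ph m k <= ph m i.
  by move=> m k i ki; apply: phi_mono => //; apply: Hphi.
have tE : forall m k, tstar n ph rate m k = bvec n (ph m) (rate m) k 0 / den M n (ph m) (rate m).
  by move=> m k; rewrite /tstar /zstar (t_E (Hrate m) (Hphi m) Hn HM HK).
split; [|split].
- rewrite /feasible; split; [|split; [|split]].
  + by move=> m; rewrite /zstar (sum_z (Hrate m) (Hphi m) Hn HM HK).
  + move=> m k; rewrite /zstar; apply: divr_gt0.
      exact: (x_pos (Hrate m) (Hphi m) Hn).
    exact: (D_gt0 (Hrate m) (Hphi m) Hn HM HK).
  + move=> m k; rewrite tE; apply: divr_gt0.
      exact: (b_gt0 (Hrate m) (Hphi m) Hn).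
    exact: (D_gt0 (Hrate m) (Hphi m) Hn HM HK).
  + move=> m k i ki.
    have -> : zstar n ph rate m i / tw (rate m i) -
        \sum_(l < K | (l < i)%N) zstar n ph rate m l = tstar n ph rate m i by [].
    rewrite !tE; apply: ler_wpM2r.
      by apply: ltW; rewrite invr_gt0; exact: (D_gt0 (Hrate m) (Hphi m) Hn HM HK).
    exact: (b_mono (Hrate m) (Hphi m) (Hmono m) Hn ki).
- move=> zeta theta [hs [hz [ht hc]]].
  rewrite /objective; apply: ler_sum => m _.
  under eq_bigr do rewrite tE.
  apply: (opt (Hrate m) (Hphi m) Hn HM HK (hs m) (ht m)).
  by move=> k; apply: hc.
- by move=> m k; rewrite tE (avec_b (Hrate m)).
Qed.
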